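(* Let $1 \le n \le N$ be integers, let $\mathcal{X} = \{1,\ldots,N\}^n$, let $P$ be the uniform distribution on $\mathcal{X}$ (weights $1/N^n$), and let $Q$ be the uniform distribution on the set $\mathcal{X}_*$ of all $x = (x_1,\ldots,x_n) \in \mathcal{X}$ with pairwise distinct components (weights $1/[N]_n$ on $\mathcal{X}_*$ and $0$ elsewhere). Then \[ \frac{n(n-1)}{2N} \ \le \ \log \rho(Q,P) \ \le \ - \frac{n}{2} \log \Bigl( 1 - \frac{n-1}{N} \Bigr) . \]
   Context: For real $a$ and integers $m \ge 1$, $[a]_m := \prod_{i=0}^{m-1}(a-i)$, and $[a]_0 := 1$. For probability measures $Q,P$ on $(\mathcal{X},\mathcal{A})$, $\rho(Q,P) := \sup_{A \in \mathcal{A}} Q(A)/P(A)$ with the conventions $0/0 := 0$ and $a/0 := \infty$ for $a>0$. *)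

(* Defs.v *)
From HB Require Import structures.
From mathcomp Require Import all_boot all_order all_algebra.
From mathcomp Require Import classical_sets boolp reals ereal exp.
Set Implicit Arguments. Unset Strict Implicit. Unset Printing Implicit Defensive.
Import Order.TTheory GRing.Theory Num.Theory.
Local Open Scope ring_scope.

Definition ffact (R : pzRingType) (a : R) (m : nat) : R :=
  \prod_(i < m) (a - i%:R).

(* A probability measure on a finite set X with sigma-algebra 2^X,
   given by its weight function p; its value on A. *)
Definition probA (R : realType) (T : finType) (p : T -> R) (A : {set T}) : R :=
  \sum_(x in A) p x.

Definition ratio (R : realType) (T : finType) (Q P : T -> R) (A : {set T})
  : \bar R :=
  if probA P A == 0 then (if probA Q A == 0 then 0%E else +oo%E)
  else (probA Q A / probA P A)%:E.

Definition rho (R : realType) (T : finType) (Q P : T -> R) : \bar R :=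
  ereal_sup (range (ratio Q P)).

(* Main.v *)
Require Import Defs.
From HB Require Import structures.
From mathcomp Require Import all_boot all_order all_algebra.
From mathcomp Require Import classical_sets boolp reals ereal exp.
From mathcomp Require Import ring lra.
Import Order.TTheory GRing.Theory Num.Theory.
Local Open Scope ring_scope.

Lemma ln_prod_pos (R : realType) (m : nat) (a : 'I_m -> R) :
  (forall i, 0 < a i) -> ln (\prod_(i < m) a i) = \sum_(i < m) ln (a i).
Proof.
elim: m a => [|m IH] a ha; first by rewrite !big_ord0 ln1.
rewrite big_ord_recr big_ord_recr /= lnM ?IH //; rewrite posrE //.
exact: prodr_gt0.
Qed.

Lemma sum_nat2 (R : realType) (m : nat) :
  (\sum_(i < m) (i%:R : R)) * 2 = m%:R * (m%:R - 1).
Proof.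
elim: m => [|m IH]; first by rewrite big_ord0 mul0r mul0r.
rewrite big_ord_recr /= mulrDl IH -natr1; ring.
Qed.

Theorem mainTheorem2 (R : realType) (n N : nat) (hn : (1 <= n)%N) (hnN : (n <= N)%N) :
  let P := fun x : {ffun 'I_n -> 'I_N} => 1 / (N%:R ^+ n) : R in
  let Q := fun x : {ffun 'I_n -> 'I_N} =>
             if injectiveb x then 1 / ffact (N%:R : R) n else 0 in
  exists r : R, rho Q P = r%:E /\
    n%:R * (n%:R - 1) / (2 * N%:R) <= ln r /\
    ln r <= - (n%:R / 2) * ln (1 - (n%:R - 1) / N%:R).
Proof.
move=> P Q.
have hN : 0 < (N%:R : R) by rewrite ltr0n; apply: leq_trans hnN.
pose a := fun i : 'I_n => 1 - (i%:R : R) / N%:R.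
have ha : forall i, 0 < a i.
  move=> i; rewrite /a subr_gt0 ltr_pdivrMr // mul1r ltr_nat.
  exact: leq_trans (ltn_ord i) hnN.
have hp : 0 < \prod_(i < n) a i by apply: prodr_gt0.
have hff : ffact (N%:R : R) n = N%:R ^+ n * \prod_(i < n) a i.
  have -> : (N%:R : R) ^+ n = \prod_(i < n) (N%:R : R) by rewrite prodr_const card_ord.
  rewrite /ffact -big_split /=.
  apply: eq_bigr => i _; rewrite /a mulrBr mulr1 mulrCA divff ?mulr1 //.
  by rewrite gt_eqF.
pose r := (\prod_(i < n) a i)^-1.
have hr : 0 < r by rewrite invr_gt0.
have hPpos : forall x, 0 < P x by move=> x; rewrite /P div1r invr_gt0 exprn_gt0.
have hQle : forall x, Q x <= r * P x.
  move=> x; rewrite /Q; case: ifP => _.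
    by rewrite hff /P /r !div1r invfM mulrC.
  by rewrite mulr_ge0 // ltW.
have hQge : forall x, 0 <= Q x.
  move=> x; rewrite /Q; case: ifP => _ //.
  by rewrite hff div1r invr_ge0 ltW // mulr_gt0 // exprn_gt0.
exists r; split.
  apply/eqP; rewrite eq_le; apply/andP; split.
    apply: ge_ereal_sup => _ [A _ <-].
    have hQA : probA Q A <= r * probA P A.
      rewrite /probA mulr_sumr; apply: ler_sum => x _; exact: hQle.
    have hQA0 : 0 <= probA Q A by apply: sumr_ge0 => x _.
    have hPA0 : 0 <= probA P A by apply: sumr_ge0 => x _; apply: ltW.
    rewrite /Defs.ratio; case: ifPn => [/eqP h0|h0].
      have -> : probA Q A == 0.
        by rewrite eq_le hQA0 andbT; move: hQA; rewrite h0 mulr0.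
      by rewrite lee_fin ltW.
    rewrite lee_fin ler_pdivrMr //.
    by rewrite lt_def h0.
  pose x0 := [ffun i : 'I_n => widen_ord hnN i].
  have hinj : injectiveb x0.
    apply/injectiveP => i j; rewrite !ffunE => /(congr1 val) /= h.
    exact: val_inj.
  apply: le_ereal_sup_tmp; exists (Defs.ratio Q P [set x0]); first by exists [set x0].
  rewrite /Defs.ratio /probA !big_set1 gt_eqF //.
  have -> : Q x0 = r * P x0.
    by rewrite /Q hinj hff /P /r !div1r invfM mulrC.
  by rewrite mulfK ?gt_eqF.
have hlnr : ln r = - \sum_(i < n) ln (a i).
  by rewrite /r lnV ?posrE // ln_prod_pos.
rewrite hlnr; split.
  have h1 : forall i : 'I_n, (i%:R : R) / N%:R <= - ln (a i).
    move=> i; rewrite lerNr /a; apply: le_ln1Dx.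
    rewrite ltrN2 ltr_pdivrMr // mul1r ltr_nat.
    exact: leq_trans (ltn_ord i) hnN.
  have h2 : \sum_(i < n) (i%:R : R) / N%:R <= - \sum_(i < n) ln (a i).
    rewrite -sumrN; apply: ler_sum => i _; exact: h1.
  apply: le_trans h2; rewrite -mulr_suml -sum_nat2 invfM.
  by rewrite mulrA mulfK ?pnatr_eq0.
pose b := 1 - (n%:R - 1) / (N%:R : R).
have hb : 0 < b.
  rewrite /b subr_gt0 ltr_pdivrMr // mul1r.
  have : (n%:R : R) <= N%:R by rewrite ler_nat.
  lra.
have hpair : forall i : 'I_n, ln b <= ln (a i) + ln (a (rev_ord i)).
  move=> i; rewrite -lnM ?posrE // ler_ln ?posrE ?mulr_gt0 //.
  rewrite /a /b /= natrB // -natr1.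
  have hi : 0 <= (i%:R : R) / N%:R by rewrite divr_ge0 // ltW.
  have hj : 0 <= ((n%:R - (i%:R + 1)) : R) / N%:R.
    rewrite divr_ge0 ?(ltW hN) // subr_ge0 natr1 ler_nat; exact: ltn_ord.
  have -> : (n%:R - 1) / N%:R = (i%:R : R) / N%:R + (n%:R - (i%:R + 1)) / N%:R.
    by rewrite -mulrDl; congr (_ * _); ring.
  set u := (i%:R : R) / N%:R in hi *; set v := (_ / N%:R) in hj *.
  rewrite -subr_ge0 (_ : _ - _ = u * v); first exact: mulr_ge0.
  by ring.
set L := ln b in hpair *.
have hsum : n%:R * L <= 2 * \sum_(i < n) ln (a i).
  have e : \sum_(i < n) ln (a (rev_ord i)) = \sum_(i < n) ln (a i).
    rewrite (reindex_inj rev_ord_inj) /=; apply: eq_bigr => i _; by rewrite rev_ordK.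
  have -> : 2 * \sum_(i < n) ln (a i) = \sum_(i < n) ln (a i) + \sum_(i < n) ln (a i) by ring.
  rewrite -{2}e -big_split /=.
  have -> : (n%:R : R) * L = \sum_(i < n) L by rewrite sumr_const card_ord mulr_natl.
  by apply: ler_sum => i _; apply: hpair.
set S := \sum_(i < n) _ in hsum *.
have -> : - (n%:R / 2) * L = - (n%:R * L) / 2 by ring.
rewrite -mulNr ler_pdivlMr //.
rewrite (_ : - S * 2 = - (2 * S)); last by ring.
rewrite (_ : 1 *- n * L = - (n%:R * L)); last by rewrite mulNr mulr_natl.
by rewrite lerN2.
Qed.
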